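(* Let $D$ be a non-commutative division ring and $R$ a maximal subring of $D$. Then at least one of the following holds: (1) $N(R)=U(R)\cup\{0\}$; (2) $R$ is a division ring and $[D:R]_l=[D:R]_r$ is finite; (3) $R$ is not a division ring and there exists a nonzero non-unit $a\in R$ with $aR=Ra$ (so that, in particular, $R$ is an Ore $G$-domain whose division ring of quotients is $D$).
   Context: All rings are associative unital and subrings share the identity. A maximal subring of a ring $T$ is a proper subring maximal under inclusion among proper subrings of $T$. $N(R)=\{x\in D: xR=Rx\}$, $U(R)$ is the set of units of $R$. $[D:R]_l$, $[D:R]_r$ are the left and right dimensions of $D$ over a subdivision ring $R$. A $G$-domain is a domain in which the intersection of all nonzero prime ideals is nonzero. *)

(* Defs.v *)
From mathcomp Require Import all_boot all_algebra.
Set Implicit Arguments. Unset Strict Implicit. Unset Printing Implicit Defensive.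
Import GRing.Theory.
Local Open Scope ring_scope.

Definition is_division_ring (D : unitRingType) : Prop :=
  forall x : D, x != 0 -> x \is a GRing.unit.

Definition is_subring (D : unitRingType) (R : D -> Prop) : Prop :=
  [/\ R 1, (forall x y, R x -> R y -> R (x - y)) & (forall x y, R x -> R y -> R (x * y))].

Definition is_maximal_subring (D : unitRingType) (R : D -> Prop) : Prop :=
  [/\ is_subring R, (exists x, ~ R x) &
      forall S : D -> Prop, is_subring S -> (forall x, R x -> S x) ->
        (exists x, ~ S x) -> forall x, S x -> R x].

Definition unitsR (D : unitRingType) (R : D -> Prop) (x : D) : Prop :=
  R x /\ exists y, [/\ R y, x * y = 1 & y * x = 1].

Definition normalizerR (D : unitRingType) (R : D -> Prop) (x : D) : Prop :=
  forall z, (exists r, R r /\ z = x * r) <-> (exists r, R r /\ z = r * x).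

Definition sub_division_ring (D : unitRingType) (R : D -> Prop) : Prop :=
  forall x, R x -> x != 0 -> unitsR R x.

Definition left_basis_of_size (D : unitRingType) (R : D -> Prop) (n : nat) : Prop :=
  exists b : 'I_n -> D,
    (forall d : D, exists c : 'I_n -> D, (forall i, R (c i)) /\ d = \sum_i c i * b i) /\
    (forall c : 'I_n -> D, (forall i, R (c i)) -> \sum_i c i * b i = 0 -> forall i, c i = 0).

Definition right_basis_of_size (D : unitRingType) (R : D -> Prop) (n : nat) : Prop :=
  exists b : 'I_n -> D,
    (forall d : D, exists c : 'I_n -> D, (forall i, R (c i)) /\ d = \sum_i b i * c i) /\
    (forall c : 'I_n -> D, (forall i, R (c i)) -> \sum_i b i * c i = 0 -> forall i, c i = 0).

(* Main.v *)
Require Import Defs.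
From mathcomp Require Import all_boot all_algebra.
From Stdlib Require Import Classical.
Set Implicit Arguments. Unset Strict Implicit. Unset Printing Implicit Defensive.
Import GRing.Theory.
Local Open Scope ring_scope.

Lemma sr1 (D : unitRingType) (R : D -> Prop) : is_subring R -> R 1.
Proof. by case. Qed.
Lemma sr0 (D : unitRingType) (R : D -> Prop) : is_subring R -> R 0.
Proof. by case=> H1 HB _; have := HB 1 1 H1 H1; rewrite subrr. Qed.
Lemma srN (D : unitRingType) (R : D -> Prop) a : is_subring R -> R a -> R (- a).
Proof. move=> HR Ha; case: (HR) => _ HB _; have := HB 0 a (sr0 HR) Ha; by rewrite sub0r. Qed.
Lemma srD (D : unitRingType) (R : D -> Prop) a b : is_subring R -> R a -> R b -> R (a + b).
Proof. move=> HR Ha Hb; case: (HR) => _ HB _; have := HB a (- b) Ha (srN HR Hb); by rewrite opprK. Qed.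
Lemma srM (D : unitRingType) (R : D -> Prop) a b : is_subring R -> R a -> R b -> R (a * b).
Proof. by case=> _ _ HM; apply: HM. Qed.

Lemma nl1 (D : unitRingType) (R : D -> Prop) y r : normalizerR R y -> R r ->
  exists r', R r' /\ y * r = r' * y.
Proof. move=> Hy Hr; have [H _] := Hy (y * r); have [r' [Hr' E]] := H (ex_intro _ r (conj Hr erefl)); by exists r'. Qed.
Lemma nr1 (D : unitRingType) (R : D -> Prop) y r : normalizerR R y -> R r ->
  exists r', R r' /\ r * y = y * r'.
Proof. move=> Hy Hr; have [_ H] := Hy (r * y); have [r' [Hr' E]] := H (ex_intro _ r (conj Hr erefl)); by exists r'. Qed.

Lemma conjR (D : unitRingType) (R : D -> Prop) y i r : is_subring R -> normalizerR R y ->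
  y \is a GRing.unit -> R r -> R (y ^+ i * r / y ^+ i).
Proof.
move=> HR Hy Uy; elim: i r => [|i IH] r Hr; first by rewrite expr0 mul1r invr1 mulr1.
rewrite exprS invrM ?unitrX // !mulrA.
have [r' [Hr' E]] := nl1 Hy (IH r Hr).
have -> : y * y ^+ i * r * (y ^+ i)^-1 * y^-1 = y * (y ^+ i * r / y ^+ i) / y by rewrite !mulrA.
by rewrite E mulrK.
Qed.

Lemma conjL (D : unitRingType) (R : D -> Prop) y i r : is_subring R -> normalizerR R y ->
  y \is a GRing.unit -> R r -> R ((y ^+ i)^-1 * r * y ^+ i).
Proof.
move=> HR Hy Uy; elim: i r => [|i IH] r Hr; first by rewrite expr0 invr1 mulr1 mul1r.
rewrite exprSr invrM ?unitrX //.
have [r' [Hr' E]] := nr1 Hy (IH r Hr).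
have -> : y^-1 * (y ^+ i)^-1 * r * (y ^+ i * y) = y^-1 * ((y ^+ i)^-1 * r * y ^+ i * y) by rewrite !mulrA.
by rewrite E mulKr.
Qed.

Lemma normV (D : unitRingType) (R : D -> Prop) y : normalizerR R y -> y \is a GRing.unit ->
  normalizerR R y^-1.
Proof.
move=> Hy Uy z; split=> -[r [Hr ->]].
- have [r' [Hr' E]] := nr1 Hy Hr; exists r'; split=> //.
  by apply: (mulIr Uy); rewrite -mulrA E mulKr // divrK.
- have [r' [Hr' E]] := nl1 Hy Hr; exists r'; split=> //.
  by apply: (mulrI Uy); rewrite mulrA E mulrK // mulVKr.
Qed.

Definition Fk (D : unitRingType) (R : D -> Prop) (y : D) (k : nat) (d : D) : Prop :=
  exists c : nat -> D, (forall i, R (c i)) /\ d = \sum_(i < k) c i * y ^+ i.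

Lemma F0 (D : unitRingType) (R : D -> Prop) y k : is_subring R -> Fk R y k 0.
Proof. move=> HR; exists (fun _ => 0); split=> [i|]; first exact: sr0. by rewrite big1 // => i _; rewrite mul0r. Qed.

Lemma FD (D : unitRingType) (R : D -> Prop) y k d e : is_subring R -> Fk R y k d -> Fk R y k e -> Fk R y k (d + e).
Proof.
move=> HR [c [Hc ->]] [c' [Hc' ->]]; exists (fun i => c i + c' i); split=> [i|]; first exact: srD.
by rewrite -big_split /=; apply: eq_bigr => i _; rewrite mulrDl.
Qed.

Lemma FN (D : unitRingType) (R : D -> Prop) y k d : is_subring R -> Fk R y k d -> Fk R y k (- d).
Proof.
move=> HR [c [Hc ->]]; exists (fun i => - c i); split=> [i|]; first exact: srN.
by rewrite -sumrN; apply: eq_bigr => i _; rewrite mulNr.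
Qed.

Lemma FlM (D : unitRingType) (R : D -> Prop) y k r d : is_subring R -> R r -> Fk R y k d -> Fk R y k (r * d).
Proof.
move=> HR Hr [c [Hc ->]]; exists (fun i => r * c i); split=> [i|]; first exact: srM.
by rewrite mulr_sumr; apply: eq_bigr => i _; rewrite mulrA.
Qed.

Lemma Fmono (D : unitRingType) (R : D -> Prop) y k r i : is_subring R -> R r -> (i < k)%N -> Fk R y k (r * y ^+ i).
Proof.
move=> HR Hr Hik; exists (fun j => if j == i then r else 0); split=> [j|].
  by case: ifP => _ //; exact: sr0.
rewrite (bigD1 (Ordinal Hik)) //= eqxx big1 ?addr0 // => j Hj.
have -> : ((j : nat) == i) = false by apply/negbTE; apply: contraNneq Hj => E; apply/eqP; exact: ord_inj.
by rewrite mul0r.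
Qed.

Lemma FrM (D : unitRingType) (R : D -> Prop) y k r d : is_subring R -> normalizerR R y ->
  y \is a GRing.unit -> R r -> Fk R y k d -> Fk R y k (d * r).
Proof.
move=> HR Hy Uy Hr [c [Hc ->]]; exists (fun i => c i * (y ^+ i * r / y ^+ i)); split=> [i|].
  by apply: srM => //; apply: conjR.
rewrite mulr_suml; apply: eq_bigr => i _.
by rewrite -[RHS]mulrA divrK ?unitrX // mulrA.
Qed.

Lemma FyM (D : unitRingType) (R : D -> Prop) y k d : is_subring R -> Fk R y k d -> Fk R y k.+1 (d * y).
Proof.
move=> HR [c [Hc ->]]; exists (fun i => if i is j.+1 then c j else 0); split=> [[|i]//|]; first exact: sr0.
rewrite big_ord_recl /= mul0r add0r mulr_suml; apply: eq_bigr => i _.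
by rewrite exprSr mulrA.
Qed.

Lemma Fwiden (D : unitRingType) (R : D -> Prop) y k k' d : is_subring R -> (k <= k')%N -> Fk R y k d -> Fk R y k' d.
Proof.
move=> HR Hk [c [Hc ->]]; exists (fun i => if (i < k)%N then c i else 0); split=> [i|].
  by case: ifP => _ //; exact: sr0.
rewrite (big_ord_widen k' (fun i => c i * y ^+ i) Hk) big_mkcond /=.
by apply: eq_bigr => i _; case: ifP => _ //; rewrite mul0r.
Qed.

Lemma Fsplit (D : unitRingType) (R : D -> Prop) y k d : Fk R y k.+1 d ->
  exists f t, [/\ Fk R y k f, R t & d = f + t * y ^+ k].
Proof.
move=> [c [Hc ->]]; exists (\sum_(i < k) c i * y ^+ i), (c k); split=> //.
  by exists c.
by rewrite big_ord_recr.
Qed.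

Lemma FyX (D : unitRingType) (R : D -> Prop) y k i d : is_subring R -> Fk R y k d -> Fk R y (k + i) (d * y ^+ i).
Proof.
move=> HR Hd; elim: i => [|i IH]; first by rewrite addn0 expr0 mulr1.
by rewrite addnS exprSr mulrA; apply: FyM.
Qed.

Lemma Fsum (D : unitRingType) (R : D -> Prop) y k K (f : 'I_K -> D) : is_subring R ->
  (forall i, Fk R y k (f i)) -> Fk R y k (\sum_(i < K) f i).
Proof.
move=> HR Hf; elim/big_ind: _ => //; first exact: F0.
by move=> a b; apply: FD.
Qed.

Definition Sy (D : unitRingType) (R : D -> Prop) (y : D) (d : D) := exists k, Fk R y k d.

Lemma Sy_subring (D : unitRingType) (R : D -> Prop) y : is_subring R -> normalizerR R y ->
  y \is a GRing.unit -> is_subring (Sy R y).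
Proof.
move=> HR Hy Uy; split.
- exists 1%N; have := Fmono y (k:=1) HR (sr1 HR) (ltn0Sn 0); by rewrite expr0 mulr1.
- move=> a b [k Ha] [K Hb]; exists (k + K)%N; apply: FD => //.
    exact: Fwiden (leq_addr _ _) Ha.
  apply: FN => //; exact: Fwiden (leq_addl _ _) Hb.
- move=> a b [k Ha] [K [c [Hc ->]]]; exists (k + K)%N.
  rewrite mulr_sumr; apply: Fsum => // i; rewrite mulrA.
  apply: (@Fwiden _ _ _ (k + i)) => //; first by rewrite leq_add2l ltnW.
  idtac.
  apply: FyX => //; exact: FrM.
Qed.

Lemma Sy_R (D : unitRingType) (R : D -> Prop) y r : is_subring R -> R r -> Sy R y r.
Proof. move=> HR Hr; exists 1%N; have := Fmono y (k:=1) HR Hr (ltn0Sn 0); by rewrite expr0 mulr1. Qed.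

Lemma Sy_y (D : unitRingType) (R : D -> Prop) y : is_subring R -> Sy R y y.
Proof. move=> HR; exists 2%N; have := Fmono y HR (sr1 HR) (isT : (1 < 2)%N); by rewrite expr1 mul1r. Qed.

Lemma Sy_all (D : unitRingType) (R : D -> Prop) y : is_maximal_subring R -> normalizerR R y ->
  y \is a GRing.unit -> ~ R y -> forall d, Sy R y d.
Proof.
move=> [HR _ Hmax] Hy Uy Ny d; apply: NNPP => Nd; apply: Ny.
apply: (Hmax (Sy R y)) => //; first exact: Sy_subring.
  by move=> r; apply: Sy_R.
  by exists d.
exact: Sy_y.
Qed.

Lemma ex_min (P : nat -> Prop) : (exists k, P k) -> exists k, P k /\ forall j, (j < k)%N -> ~ P j.
Proof.
move=> [k Pk]; apply: NNPP => Hn.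
suff H : forall n j, (j <= n)%N -> ~ P j by exact: (H k k (leqnn k) Pk).
elim=> [|n IH] j Hj Pj.
  move: Hj; rewrite leqn0 => /eqP Ej; subst j; apply: Hn; exists 0%N; split=> //.
case: (ltnP j n.+1) => Hjn; first exact: (IH j Hjn Pj).
have Ej : j = n.+1 by apply/eqP; rewrite eqn_leq Hj Hjn.
subst j; apply: Hn; exists n.+1; split=> // j Hj; exact: IH.
Qed.

Lemma revN (D : unitRingType) (R : D -> Prop) x : is_subring R -> unitsR R x \/ x = 0 -> normalizerR R x.
Proof.
move=> HR [[Rx [y [Ry E1 E2]]] | ->] z.
- split=> -[r [Hr ->]].
    exists (x * r * y); split; first by do 2 apply: srM => //.
    by rewrite -mulrA E2 mulr1.
  exists (y * r * x); split; first by do 2 apply: srM => //.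
  by rewrite !mulrA E1 mul1r.
- by split=> -[r [Hr ->]]; exists r; rewrite mul0r mulr0.
Qed.

Lemma main_case (D : unitRingType) (R : D -> Prop) x : is_division_ring D -> is_maximal_subring R ->
  normalizerR R x -> x != 0 -> ~ R x -> ~ R x^-1 ->
  sub_division_ring R /\ exists n : nat, left_basis_of_size R n /\ right_basis_of_size R n.
Proof.
move=> Hdiv Hmax Hx Hx0 NRx NRxi.
have HR : is_subring R by case: Hmax.
have Ux : x \is a GRing.unit := Hdiv x Hx0.
have Hxi : normalizerR R x^-1 := normV Hx Ux.
have Uxi : x^-1 \is a GRing.unit by rewrite unitrV.
have SxAll := Sy_all Hmax Hx Ux NRx.
have SxiAll := Sy_all Hmax Hxi Uxi NRxi.
have [n [s [Hs Ex]]] := SxiAll x.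
have HxN : Fk R x n.+1 (x ^+ n.+1).
  have -> : x ^+ n.+1 = (\sum_(i < n) s i * x^-1 ^+ i) * x ^+ n by rewrite -Ex exprS.
  rewrite mulr_suml; apply: Fsum => // i.
  have -> : s i * x^-1 ^+ i * x ^+ n = s i * x ^+ (n - i).
    rewrite -mulrA exprVn; congr (_ * _).
    have E : x ^+ n = x ^+ i * x ^+ (n - i) by rewrite -exprD subnKC // ltnW.
    by rewrite E mulKr // unitrX.
  by apply: Fmono => //; rewrite ltnS leq_subr.
set N := n.+1.
have FNx : forall d, Fk R x N d -> Fk R x N (d * x).
  move=> d Hd; have [f [t [Hf Ht ->]]] := Fsplit (FyM HR Hd).
  by apply: FD => //; apply: FlM.
have XN : forall k, Fk R x N (x ^+ k).
  elim=> [|k IH]; first by have := Fmono x (k:=N) HR (sr1 HR) (ltn0Sn n); rewrite mul1r.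
  by rewrite exprSr; apply: FNx.
have DN : forall d, Fk R x N d.
  move=> d; have [k [c [Hc ->]]] := SxAll d; apply: Fsum => // i; exact: FlM.
set P := fun k => exists c : nat -> D, [/\ (forall i, R (c i)), (exists2 i, (i < k)%N & c i != 0)
   & \sum_(i < k) c i * x ^+ i = 0].
have PN1 : P N.+1.
  have [c [Hc Ec]] := HxN.
  exists (fun i => if (i < N)%N then - c i else 1); split.
  - by move=> i; case: ifP => _; [apply: srN | apply: sr1].
  - by exists N => //; rewrite ltnn oner_neq0.
  rewrite big_ord_recr /= ltnn mul1r.
  rewrite (eq_bigr (fun i : 'I_N => - (c i * x ^+ i))) => [|i _]; last by rewrite ltn_ord mulNr.
  by rewrite sumrN -Ec addNr.
have [M [PM Mmin]] := ex_min (ex_intro P N.+1 PN1).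
case: M PM Mmin => [|m] PM Mmin.
  by exfalso; case: PM => c [_ [i Hi _] _].
have indep : forall c : nat -> D, (forall i, R (c i)) -> \sum_(i < m) c i * x ^+ i = 0 ->
    forall i, (i < m)%N -> c i = 0.
  move=> c Hc Es i Hi; apply: NNPP => Hne; apply: (Mmin m (ltnSn m)); exists c; split=> //.
  by exists i => //; apply/eqP.
case: PM => c [Hc [i0 Hi0 Hne] Es].
have Ha : c m != 0.
  apply/negP => /eqP Hcm; apply: (Mmin m (ltnSn m)); exists c; split=> //.
    exists i0 => //; rewrite ltn_neqAle -ltnS Hi0 andbT; apply/eqP => Ei; subst i0.
    by rewrite Hcm eqxx in Hne.
  by move: Es; rewrite big_ord_recr /= Hcm mul0r addr0.
set a := c m.
have Ua : a \is a GRing.unit := Hdiv a Ha.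
have Fax : Fk R x m (a * x ^+ m).
  move: Es; rewrite big_ord_recr /= => /eqP; rewrite addrC addr_eq0 => /eqP ->.
  by apply: FN => //; exists c.
have B : forall d, Fk R x m.+1 d -> Fk R x m (a * d).
  move=> d Hd; have [f [t [Hf Ht ->]]] := Fsplit Hd.
  rewrite mulrDr; apply: FD => //; first by apply: FlM => //; exact: Hc.
  have -> : a * (t * x ^+ m) = a * x ^+ m * ((x ^+ m)^-1 * t * x ^+ m).
    by rewrite !mulrA mulrK // unitrX.
  by apply: FrM => //; apply: conjL.
have PP : forall k d, Fk R x (m + k.+1) d -> Fk R x m (a ^+ k.+1 * d).
  elim=> [|k IH] d Hd; first by rewrite expr1; apply: B; rewrite -addn1.
  rewrite addnS in Hd; have [f [t [Hf Ht ->]]] := Fsplit Hd.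
  rewrite mulrDr; apply: FD => //.
    by rewrite exprS -mulrA; apply: FlM => //; [exact: Hc | apply: IH].
  have -> : a ^+ k.+2 * (t * x ^+ (m + k.+1)) = a * (a ^+ k.+1 * (t * x ^+ (m + k)) * x).
    by rewrite (exprS a k.+1) (_ : x ^+ (m + k.+1) = x ^+ (m + k) * x) ?addnS ?exprSr // !mulrA.
  apply: B; apply: FyM => //; apply: IH; apply: Fmono => //.
  by rewrite addnS ltnSn.
have Fall : forall d, Fk R x m d.
  move=> d; have -> : d = a ^+ N.+1 * ((a ^+ N.+1)^-1 * d) by rewrite mulVKr // unitrX.
  apply: PP; apply: (@Fwiden _ _ _ N) => //; try exact: DN.
  by rewrite addnS ltnW // ltnS leq_addl.
clear -Hdiv HR Hx Ux Hxi Uxi indep Fall.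
case: m indep Fall => [|m] indep Fall.
  exfalso; have [c' [_ E1]] := Fall 1; move: E1; rewrite big_ord0; apply/eqP; exact: oner_neq0.
split.
  move=> b Hb Hb0; have Ub : b \is a GRing.unit := Hdiv b Hb0.
  have [c' [Hc' Eb]] := Fall b^-1.
  have Hi := indep (fun i => b * c' i - (if i == 0%N then 1 else 0)) _ _ 0%N (ltn0Sn _).
  have E0 : b * c' 0%N = 1.
    apply/eqP; rewrite -subr_eq0; apply/eqP; apply: Hi.
      move=> i; apply: srD => //; first exact: srM.
      by apply: srN => //; case: (i == 0%N); [apply: sr1 | apply: sr0].
    have -> : \sum_(i < m.+1) (b * c' i - (if (i : nat) == 0%N then 1 else 0)) * x ^+ i =
       b * (\sum_(i < m.+1) c' i * x ^+ i) - \sum_(i < m.+1) (if (i : nat) == 0%N then 1 else 0) * x ^+ i.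
      by rewrite mulr_sumr -sumrB; apply: eq_bigr => i _; rewrite mulrBl mulrA.
    rewrite -Eb mulrV // big_ord_recl /= expr0 mulr1 big1 ?addr0 ?subrr // => i _.
    by rewrite mul0r.
  split=> //; exists (c' 0%N); split=> //.
  have -> : c' 0%N = b^-1 by rewrite -[c' 0%N](mulKr Ub) E0 mulr1.
  by rewrite mulVr.
exists m.+1; split.
- exists (fun i : 'I_m.+1 => x ^+ i); split.
    move=> d; have [c [Hc ->]] := Fall d; exists (fun i : 'I_m.+1 => c i); split=> //.
  move=> c Hc Es i.
  have Hs : \sum_(j < m.+1) c (inord j) * x ^+ j = 0.
    by rewrite -[RHS]Es; apply: eq_bigr => j _; rewrite inord_val.
  by have := indep (fun j => c (inord j)) (fun j => Hc _) Hs i (ltn_ord i); rewrite inord_val.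
- exists (fun i : 'I_m.+1 => x ^+ i); split.
    move=> d; have [c [Hc ->]] := Fall d.
    exists (fun i : 'I_m.+1 => (x ^+ i)^-1 * c i * x ^+ i); split.
      by move=> i; apply: conjL.
    by apply: eq_bigr => i _; rewrite mulrA mulVKr // unitrX.
  move=> c Hc Es i.
  have Hs : \sum_(j < m.+1) (x ^+ j * c (inord j) / x ^+ j) * x ^+ j = 0.
    rewrite -[RHS]Es; apply: eq_bigr => j _; by rewrite inord_val divrK // unitrX.
  have Hz := indep (fun j => x ^+ j * c (inord j) / x ^+ j) (fun j => @conjR _ _ x j _ HR Hx Ux (Hc _)) Hs i (ltn_ord i).
  rewrite /= inord_val in Hz.
  have -> : c i = (x ^+ i)^-1 * (x ^+ i * c i / x ^+ i) * x ^+ i.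
    by rewrite -[RHS]mulrA divrK ?unitrX // mulKr // unitrX.
  by rewrite Hz mulr0 mul0r.
Qed.

Theorem theorem2p5 (D : unitRingType) (R : D -> Prop) :
  is_division_ring D ->
  (exists x y : D, x * y != y * x) ->
  is_maximal_subring R ->
  (forall x, normalizerR R x <-> (unitsR R x \/ x = 0))
  \/ (sub_division_ring R /\ exists n : nat, left_basis_of_size R n /\ right_basis_of_size R n)
  \/ (~ sub_division_ring R /\
      exists a : D, [/\ R a, a != 0, ~ unitsR R a & normalizerR R a]).
Proof.
move=> Hdiv _ Hmax.
have HR : is_subring R by case: Hmax.
case: (classic (forall x, normalizerR R x <-> (unitsR R x \/ x = 0))) => [H|H]; first by left.
right; have [x Hx] := not_all_ex_not _ _ H.
have NU : ~ (unitsR R x \/ x = 0) by move=> h; apply: Hx; split=> // _; exact: revN.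
have Nx : normalizerR R x.
  apply: NNPP => Nn; apply: Hx; split=> h; first by case: Nn.
  by case: NU.
have Hx0 : x != 0 by apply/eqP => h; apply: NU; right.
have Ux : x \is a GRing.unit := Hdiv x Hx0.
case: (classic (R x)) => Rx.
  right; split; last by exists x; split=> // h; apply: NU; left.
  by move=> Hsd; apply: NU; left; apply: Hsd.
case: (classic (R x^-1)) => Rxi.
  have Hxi0 : x^-1 != 0 by rewrite invr_eq0.
  have NUi : ~ unitsR R x^-1.
    move=> [_ [z [Hz E1 _]]]; apply: Rx.
    by have <- : z = x by rewrite -[z](mulVKr Ux) E1 mulr1.
  right; split; first by move=> Hsd; apply: NUi; apply: Hsd.
  by exists x^-1; split=> //; apply: normV.
by left; apply: (main_case Hdiv Hmax Nx Hx0 Rx Rxi).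
Qed.
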